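(* Let $K$ be a nonempty finite set and $X=\Delta(K)$. 1. For each finite set $S$, the posterior mapping $\psi_S$ is $1$-Lipschitz from $(\Delta(K\times S),\|\cdot\|_1)$ to $(\Delta_f(X),d_* )$. 2. For all $u,v\in\Delta_f(X)$, $$d_*(u,v)=\inf\{\|\pi-\pi'\|_1:\ S\text{ finite},\ \pi,\pi'\in\Delta(K\times S),\ \psi_S(\pi)=u,\ \psi_S(\pi')=v\}.$$
   Context: $\Delta_f(X)$ is the set of finitely supported probabilities on $X=\Delta(K)$. For $\pi\in\Delta(K\times S)$, $\|\pi\|_1=\sum_{k,s}|\pi(k,s)|$. For a finite set $S$, $\psi_S:\Delta(K\times S)\to\Delta_f(X)$ is defined by $\psi_S(\pi)=\sum_{s\in S}\pi(s)\delta_{p(s)}$, where: - $\pi(s)=\sum_k\pi(k,s)$, and - $p(s)\in X$ is given by $p^k(s)=\pi(k,s)/\pi(s)$ (arbitrary if $\pi(s)=0$). $D_1=\{f\in\mathcal C(X):\ \forall x,y\in X,\ \forall a,b\ge0,\ af(x)-bf(y)\le\|ax-by\|_1\}$, and $d_*(u,v)=\sup_{f\in D_1}\big(u(f)-v(f)\big)$ with $u(f)=\sum_xu(x)f(x)$. *)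

(* Defs.v *)
From Stdlib Require Import Reals List ClassicalEpsilon.
From mathcomp Require Import all_boot.

Set Implicit Arguments.
Unset Strict Implicit.
Unset Printing Implicit Defensive.

Local Open Scope R_scope.

Definition rsum (T : finType) (F : T -> R) : R := \big[Rplus/R0]_(t : T) F t.

Definition lsum (A : Type) (F : A -> R) (l : list A) : R :=
  fold_right (fun a r => F a + r) 0 l.

Definition Pt (K : finType) := K -> R.

Definition l1 (T : finType) (x : T -> R) : R := rsum (fun t => Rabs (x t)).

Definition inX (K : finType) (x : Pt K) : Prop :=
  (forall k, 0 <= x k) /\ rsum x = 1.

Definition inDelta (T : finType) (pi : T -> R) : Prop :=
  (forall t, 0 <= pi t) /\ rsum pi = 1.

(* Delta_f(X): finitely supported probabilities on X, given by their mass
   function u : Pt K -> R. *)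
Definition is_fsprob (K : finType) (u : Pt K -> R) : Prop :=
  (forall x, 0 <= u x) /\
  (forall x, u x <> 0 -> inX x) /\
  exists l : list (Pt K), NoDup l /\ (forall x, u x <> 0 -> In x l) /\
                          lsum u l = 1.

Definition fsupp (K : finType) (u : Pt K -> R) : list (Pt K) :=
  epsilon (inhabits nil)
    (fun l => NoDup l /\ forall x, u x <> 0 -> In x l).

Definition integ (K : finType) (u : Pt K -> R) (f : Pt K -> R) : R :=
  lsum (fun x => u x * f x) (fsupp u).

Definition contX (K : finType) (f : Pt K -> R) : Prop :=
  forall x, inX x -> forall eps, 0 < eps ->
    exists delta, 0 < delta /\
      forall y, inX y -> l1 (fun k => x k - y k) < delta ->
        Rabs (f x - f y) < eps.

Definition D1 (K : finType) (f : Pt K -> R) : Prop :=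
  contX f /\
  forall x y, inX x -> inX y -> forall a b, 0 <= a -> 0 <= b ->
    a * f x - b * f y <= l1 (fun k => a * x k - b * y k).

Definition dstar_set (K : finType) (u v : Pt K -> R) : R -> Prop :=
  fun r => exists f, D1 f /\ r = integ u f - integ v f.

Definition dstar (K : finType) (u v : Pt K -> R) : R :=
  epsilon (inhabits 0) (fun r => is_lub (dstar_set u v) r).

Definition is_glb (E : R -> Prop) (m : R) : Prop :=
  (forall r, E r -> m <= r) /\ (forall m', (forall r, E r -> m' <= r) -> m' <= m).

Definition marg (K S : finType) (pi : K * S -> R) (s : S) : R :=
  rsum (fun k => pi (k, s)).

(* p(s): posterior; p^k(s) = pi(k,s)/pi(s) (irrelevant when pi(s) = 0) *)
Definition post (K S : finType) (pi : K * S -> R) (s : S) : Pt K :=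
  fun k => pi (k, s) / marg pi s.

(* psi_S(pi) = sum_s pi(s) delta_{p(s)}, as a mass function on points *)
Definition psi (K S : finType) (pi : K * S -> R) : Pt K -> R :=
  fun x => rsum (fun s => if excluded_middle_informative (post pi s = x)
                          then marg pi s else 0).

(* Main.v *)
Require Import Defs.
From HB Require Import structures.
From Stdlib Require Import Reals Lra Classical List Permutation ClassicalEpsilon FunctionalExtensionality.
From mathcomp Require Import all_boot.
Set Implicit Arguments.
Unset Strict Implicit.
Local Open Scope R_scope.

HB.instance Definition _ := Monoid.isComLaw.Build R R0 Rplus (fun a b c => esym (Rplus_assoc a b c)) Rplus_comm Rplus_0_l.

Lemma rsum_add (T : finType) (F G : T -> R) : rsum (fun t => F t + G t) = rsum F + rsum G.
Proof. by rewrite /rsum big_split. Qed.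

Lemma rsum_scal (T : finType) (c : R) (F : T -> R) : rsum (fun t => c * F t) = c * rsum F.
Proof. rewrite /rsum. symmetry. apply: (big_morph (fun x => c * x)). move=> x y; ring. ring. Qed.

Lemma rsum_le (T : finType) (F G : T -> R) : (forall t, F t <= G t) -> rsum F <= rsum G.
Proof. move=> H; rewrite /rsum. apply: (big_ind2 (fun a b => a <= b)) => //; [lra| move=> *; lra]. Qed.

Lemma rsum_abs (T : finType) (F : T -> R) : Rabs (rsum F) <= rsum (fun t => Rabs (F t)).
Proof. rewrite /rsum. apply: (big_ind2 (fun a b => Rabs a <= b)).
 - rewrite Rabs_R0; lra.
 - move=> a b c d H1 H2. eapply Rle_trans; [apply Rabs_triang|lra].
 - move=> *; lra. Qed.

Lemma rsum_0 (T : finType) : rsum (fun _ : T => 0) = 0.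
Proof. rewrite /rsum; apply: big1 => t _; reflexivity. Qed.

Lemma rsum_ext (T : finType) (F G : T -> R) : (forall t, F t = G t) -> rsum F = rsum G.
Proof. move=> H; rewrite /rsum; apply: eq_bigr => t _; apply H. Qed.

Lemma rsum_pair (T1 T2 : finType) (F : T1 * T2 -> R) : rsum F = rsum (fun a => rsum (fun b => F (a, b))).
Proof. rewrite /rsum pair_bigA. by apply: eq_bigr => -[a b] _. Qed.

Lemma rsum_swap (T1 T2 : finType) (F : T1 -> T2 -> R) :
  rsum (fun a => rsum (fun b => F a b)) = rsum (fun b => rsum (fun a => F a b)).
Proof. by rewrite /rsum exchange_big. Qed.

Lemma rsum_sum (T1 T2 : finType) (F : T1 + T2 -> R) :
  rsum F = rsum (fun a => F (inl a)) + rsum (fun b => F (inr b)).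
Proof. by rewrite /rsum big_sumType. Qed.

Lemma rsum_delta (T : finType) (t0 : T) (F : T -> R) :
  rsum (fun t => if t == t0 then F t else 0) = F t0.
Proof. rewrite /rsum (bigD1 t0) //= eqxx big1 ?Rplus_0_r // => t /negbTE ->. by []. Qed.

Lemma rsum_nonneg (T : finType) (F : T -> R) : (forall t, 0 <= F t) -> 0 <= rsum F.
Proof. move=> H; rewrite -(rsum_0 T); exact: rsum_le. Qed.

Lemma rsum_opp (T : finType) (F : T -> R) : rsum (fun t => - F t) = - rsum F.
Proof. have -> : - rsum F = -1 * rsum F by ring. rewrite -rsum_scal. apply rsum_ext => t; ring. Qed.

Lemma delta_mul (T:finType) (t0:T) (a:R) (G:T->R) :
  rsum (fun t => (if t == t0 then a else 0) * G t) = a * G t0.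
Proof. rewrite -(rsum_delta t0 (fun t => a * G t)). apply rsum_ext => t; case: (t == t0); ring. Qed.

Lemma bigmin_le_seq (C : eqType) (r : seq C) (P : pred C) (U : C -> R) e p :
  p \in r -> P p -> \big[Rmin/e]_(i <- r | P i) U i <= U p.
Proof.
elim: r => [|a r IH] //= Hin Pp. rewrite big_cons. move: Hin; rewrite in_cons => /orP [/eqP <-|Hin].
- by rewrite Pp; apply Rmin_l.
- case: (P a); last by apply IH.
  eapply Rle_trans; [apply Rmin_r|by apply IH].
Qed.

Lemma bigmax_ge_seq (C : eqType) (r : seq C) (P : pred C) (U : C -> R) e p :
  p \in r -> P p -> U p <= \big[Rmax/e]_(i <- r | P i) U i.
Proof.
elim: r => [|a r IH] //= Hin Pp. rewrite big_cons. move: Hin; rewrite in_cons => /orP [/eqP <-|Hin].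
- rewrite Pp; apply Rmax_l.
- case: (P a); last by apply IH.
  eapply Rle_trans; [by apply IH|apply Rmax_r].
Qed.

Lemma sep_lemma (C : finType) (P Q : pred C) (L U : C -> R) :
  (forall q p, Q q -> P p -> L q <= U p) ->
  exists t, (forall q, Q q -> L q <= t) /\ (forall p, P p -> t <= U p).
Proof.
move=> H.
pose m0 := \big[Rmin/0]_(p | P p) U p.
exists (\big[Rmax/m0]_(q | Q q) L q). split.
- move=> q Qq. apply: bigmax_ge_seq; last exact Qq. by rewrite mem_index_enum.
- move=> p Pp. apply: (big_ind (fun x => x <= U p)).
  + apply: bigmin_le_seq => //; exact: mem_index_enum.
  + move=> x y Hx Hy. by apply Rmax_lub.
  + move=> q Qq; by apply H.
Qed.

Definition dotv (V : finType) (a x : V -> R) := rsum (fun w => a w * x w).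

Definition feasible (V C : finType) (A : C -> V -> R) (b : C -> R) :=
  exists x : V -> R, forall c, dotv (A c) x <= b c.
Definition certif (V C : finType) (A : C -> V -> R) (b : C -> R) :=
  exists y : C -> R, (forall c, 0 <= y c) /\
    (forall w, rsum (fun c => y c * A c w) = 0) /\ rsum (fun c => y c * b c) < 0.

Lemma farkas0 (V C : finType) (A : C -> V -> R) b :
  (forall c w, A c w = 0) -> feasible A b \/ certif A b.
Proof. move=> H0.
 case: (classic (forall c, 0 <= b c)) => Hb.
 - left. exists (fun _ => 0). move=> c. rewrite /dotv (@rsum_ext _ _ (fun _ => 0)) ?rsum_0 //.
   move=> w; rewrite H0; ring.
 - right. apply not_all_ex_not in Hb. case: Hb => c0 Hc0.
   exists (fun c => if c == c0 then 1 else 0). split; [move=> c; case: (c==c0); lra|split].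
   + move=> w. rewrite delta_mul H0; ring.
   + rewrite delta_mul. lra.
Qed.

Definition blt (x y : R) : bool := if Rlt_dec x y then true else false.
Definition beq0 (x : R) : bool := if Req_EM_T x 0 then true else false.
Lemma bltP x y : blt x y = true <-> x < y.
Proof. rewrite /blt; case: Rlt_dec; split => //. Qed.
Lemma beq0P x : beq0 x = true <-> x = 0.
Proof. rewrite /beq0; case: Req_EM_T; split => //. Qed.

Definition Ycomb (C : finType) (a : C -> R) (c' : C + C * C) (c0 : C) : R :=
  match c' with
  | inl c => if beq0 (a c) then (if c0 == c then 1 else 0) else 0
  | inr (p, q) => if blt 0 (a p) && blt (a q) 0 then
       (if c0 == p then - a q else 0) + (if c0 == q then a p else 0) else 0
  end.

Lemma Ycomb_nonneg (C : finType) (a : C -> R) c' c0 : 0 <= Ycomb a c' c0.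
Proof.
case: c' => [c|[p q]] /=.
- case: beq0 => //; last lra. case: (c0 == c); lra.
- case E: (blt 0 (a p)); case E2: (blt (a q) 0) => /=; try lra.
  move/bltP: E; move/bltP: E2 => *. case: (c0 == p); case: (c0 == q); lra.
Qed.

Lemma Ycomb_a (C : finType) (a : C -> R) c' : rsum (fun c => Ycomb a c' c * a c) = 0.
Proof.
case: c' => [c|[p q]] /=.
- case E: (beq0 (a c)).
  + rewrite delta_mul. move/beq0P: E => ->; ring.
  + rewrite (@rsum_ext _ _ (fun _ => 0)) ?rsum_0 // => t; ring.
- case: (blt 0 (a p) && blt (a q) 0).
  + rewrite (@rsum_ext _ _ (fun t => (if t == p then - a q else 0) * a t + (if t == q then a p else 0) * a t)).
    * rewrite rsum_add !delta_mul; ring.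
    * move=> t; ring.
  + rewrite (@rsum_ext _ _ (fun _ => 0)) ?rsum_0 // => t; ring.
Qed.

Lemma comb_swap (C C' : finType) (y' : C' -> R) (Y : C' -> C -> R) (G : C -> R) :
  rsum (fun c => rsum (fun c' => y' c' * Y c' c) * G c) =
  rsum (fun c' => y' c' * rsum (fun c => Y c' c * G c)).
Proof.
rewrite (@rsum_ext _ _ (fun c => rsum (fun c' => G c * (y' c' * Y c' c)))); last first.
  move=> c; rewrite Rmult_comm rsum_scal //.
rewrite rsum_swap. apply rsum_ext => c'. rewrite -rsum_scal. apply rsum_ext => c. ring.
Qed.

Lemma dot_comb (V C : finType) (Y : C -> R) (A : C -> V -> R) x :
  dotv (fun w => rsum (fun c => Y c * A c w)) x = rsum (fun c => Y c * dotv (A c) x).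
Proof.
rewrite /dotv (@rsum_ext _ _ (fun w => rsum (fun c => x w * (Y c * A c w)))); last first.
  move=> w; rewrite Rmult_comm rsum_scal //.
rewrite rsum_swap. apply rsum_ext => c. rewrite -rsum_scal. apply rsum_ext => w. ring.
Qed.

Lemma dot_upd (V : finType) (a x : V -> R) v t :
  dotv a (fun w => if w == v then t else x w) = dotv a x + a v * (t - x v).
Proof.
rewrite /dotv. rewrite (@rsum_ext _ _ (fun w => a w * x w + (if w == v then a v * (t - x v) else 0))).
- by rewrite rsum_add (rsum_delta v (fun _ => a v * (t - x v))).
- move=> w. case: eqP => [->|_]; ring.
Qed.

Lemma arith1 ap aq rp rq : 0 < ap -> aq < 0 -> aq * rp - ap * rq <= 0 -> rq / aq <= rp / ap.
Proof.
move=> H1 H2 H3.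
have E1 : rq / aq = (- rq * ap) / (ap * - aq) by field; lra.
have E2 : rp / ap = (- rp * aq) / (ap * - aq) by field; lra.
rewrite E1 E2. apply Rmult_le_compat_r.
- apply Rlt_le, Rinv_0_lt_compat. nra.
- lra.
Qed.

Lemma farkas (V : finType) (vs : list V) : forall (C : finType) (A : C -> V -> R) b,
  (forall c w, ~ In w vs -> A c w = 0) -> feasible A b \/ certif A b.
Proof.
elim: vs => [|v vs IH] C A b HA.
- apply farkas0 => c w; apply HA; simpl; tauto.
- pose a := fun c => A c v.
  pose A' := fun c' w => rsum (fun c => Ycomb a c' c * A c w).
  pose b' := fun c' => rsum (fun c => Ycomb a c' c * b c).
  have HA' : forall c' w, ~ In w vs -> A' c' w = 0.
  { move=> c' w Hw. rewrite /A'. case: (w =P v) => [->|Hne].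
    - exact: Ycomb_a.
    - rewrite (@rsum_ext _ _ (fun _ => 0)) ?rsum_0 // => c.
      rewrite HA; first ring. move=> [H|H] //. by apply Hne. }
  case: (IH _ A' b' HA') => [[x' Hx']|[y' [Hy1 [Hy2 Hy3]]]].
  + left.
    pose r := fun c => b c - dotv (A c) x' + a c * x' v.
    have Hpair : forall q p, (blt (a q) 0) -> (blt 0 (a p)) -> r q / a q <= r p / a p.
    { move=> q p Hq Hp. have := Hx' (inr (p, q)).
      rewrite /A' dot_comb /b' /= Hq Hp /=.
      rewrite (@rsum_ext _ _ (fun t => (if t == p then - a q else 0) * dotv (A t) x' + (if t == q then a p else 0) * dotv (A t) x')); last by move=> t; ring.
      rewrite (@rsum_ext _ (fun c => ((if c == p then - a q else 0) + (if c == q then a p else 0)) * b c) (fun t => (if t == p then - a q else 0) * b t + (if t == q then a p else 0) * b t)); last by move=> t; ring.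
      rewrite !rsum_add !delta_mul => H.
      move/bltP: Hq; move/bltP: Hp => Hp Hq.
      apply: arith1 => //. rewrite /r. nra. }
    have [t [Ht1 Ht2]] := sep_lemma Hpair.
    exists (fun w => if w == v then t else x' w) => c.
    rewrite dot_upd. case: (Rtotal_order (a c) 0) => [Hn|[Hz|Hp]].
    * have := Ht1 c. move/bltP: Hn => Hn'. move=> /(_ Hn') H.
      move/bltP: Hn' => Hn'. have : a c * t <= r c.
      { have -> : r c = (r c / a c) * a c by field; lra. nra. }
      rewrite /r /a. nra.
    * have := Hx' (inl c). rewrite /A' dot_comb /b' /=.
      have -> : beq0 (a c) = true by apply/beq0P.
      rewrite !delta_mul. rewrite /a in Hz. rewrite Hz. lra.
    * have := Ht2 c. move/bltP: Hp => Hp'. move=> /(_ Hp') H.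
      move/bltP: Hp' => Hp'. have : a c * t <= r c.
      { have -> : r c = (r c / a c) * a c by field; lra. nra. }
      rewrite /r /a. nra.
  + right. exists (fun c => rsum (fun c' => y' c' * Ycomb a c' c)). split; [|split].
    * move=> c. apply rsum_nonneg => c'. apply Rmult_le_pos => //. exact: Ycomb_nonneg.
    * move=> w. rewrite comb_swap. exact: Hy2.
    * rewrite comb_swap. exact: Hy3.
Qed.

Lemma lsum_big (A : Type) (F : A -> R) (l : list A) : lsum F l = \big[Rplus/R0]_(x <- l) F x.
Proof. elim: l => [|a l IH] /=; first by rewrite big_nil. by rewrite big_cons IH. Qed.

Lemma lsum_ord (A : Type) (x0 : A) (F : A -> R) (l : list A) :
  lsum F l = rsum (fun i : 'I_(size l) => F (nth x0 l i)).
Proof. by rewrite lsum_big (big_nth x0) big_mkord. Qed.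

Lemma lsum_perm (A : Type) (F : A -> R) (l1 l2 : list A) : Permutation l1 l2 -> lsum F l1 = lsum F l2.
Proof. elim => //= [x l l' _ -> | x y l | l l' l'' _ H1 _ H2] //. ring. by rewrite H1. Qed.

Definition nzb (A : Type) (g : A -> R) (x : A) : bool :=
  if excluded_middle_informative (g x = 0) then false else true.

Lemma nzbP (A : Type) (g : A -> R) x : nzb g x = true <-> g x <> 0.
Proof. rewrite /nzb; case: excluded_middle_informative; split => //. Qed.

Lemma lsum_filter (A : Type) (g : A -> R) l : lsum g l = lsum g (List.filter (nzb g) l).
Proof. elim: l => [|a l IH] //=. case E: (nzb g a) => /=. by rewrite IH.
 move: E; rewrite /nzb; case: excluded_middle_informative => // H _. rewrite H IH Rplus_0_l; reflexivity. Qed.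

Lemma lsum_indep (A : Type) (g : A -> R) l1 l2 : NoDup l1 -> NoDup l2 ->
  (forall x, g x <> 0 -> In x l1) -> (forall x, g x <> 0 -> In x l2) -> lsum g l1 = lsum g l2.
Proof.
move=> N1 N2 C1 C2. rewrite (lsum_filter g l1) (lsum_filter g l2). apply lsum_perm.
apply NoDup_Permutation; try apply NoDup_filter => //.
move=> x. rewrite !filter_In !nzbP. split; move=> [_ H]; split => //; auto.
Qed.

Lemma lsum_nonneg (A : Type) (g : A -> R) l : (forall x, 0 <= g x) -> 0 <= lsum g l.
Proof. move=> H; elim: l => [|a l IH] /=; [lra|]. have := H a; lra. Qed.

Lemma good_list (K : finType) (u : Pt K -> R) : is_fsprob u ->
  exists l, NoDup l /\ (forall x, u x <> 0 <-> In x l) /\ lsum u l = 1.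
Proof.
move=> [Hpos [HX [l [Nl [Cl Sl]]]]].
exists (List.filter (nzb u) l). split; [|split].
- exact: NoDup_filter.
- move=> x; rewrite filter_In nzbP; split; [move=> H; split; auto|by move=> []].
- by rewrite -lsum_filter.
Qed.

Lemma fsupp_spec (K : finType) (u : Pt K -> R) : is_fsprob u ->
  NoDup (fsupp u) /\ (forall x, u x <> 0 -> In x (fsupp u)).
Proof.
move=> [_ [_ [l [Nl [Cl _]]]]]. rewrite /fsupp.
apply: (epsilon_spec (inhabits nil) (fun l => NoDup l /\ forall x, u x <> 0 -> In x l)).
by exists l.
Qed.

Lemma lsum_rsum (A : Type) (T : finType) (G : A -> T -> R) l :
  lsum (fun x => rsum (G x)) l = rsum (fun t => lsum (fun x => G x t) l).
Proof. elim: l => [|a l IH] /=; first by rewrite rsum_0. by rewrite IH rsum_add. Qed.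

Lemma lsum_eqind (A : Type) (y : A) (c : R) l : NoDup l ->
  lsum (fun x => if excluded_middle_informative (y = x) then c else 0) l =
  if excluded_middle_informative (In y l) then c else 0.
Proof.
elim: l => [|a l IH] /= N.
- case: excluded_middle_informative => //.
- inversion N as [|a0 l0 Ha Hl]; subst. rewrite IH //.
  case: (excluded_middle_informative (y = a)) => [E|E];
  case: (excluded_middle_informative (In y l)) => G1;
  case: (excluded_middle_informative (a = y \/ In y l)) => G2; subst; simpl; try tauto; try ring; exfalso; firstorder.
Qed.

Lemma rsum_ge_term (T : finType) (F : T -> R) t0 : (forall t, 0 <= F t) -> F t0 <= rsum F.
Proof.
move=> H. rewrite /rsum (bigD1 t0) //=. have : 0 <= \big[Rplus/R0]_(i | i != t0) F i.
  apply: (big_ind (fun x => 0 <= x)) => //; [lra| move=> *; lra].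
lra.
Qed.

Lemma l1_X (K : finType) (x : Pt K) (a : R) : inX x -> 0 <= a -> l1 (fun k => a * x k) = a.
Proof. move=> [H1 H2] Ha. rewrite /l1 (@rsum_ext _ _ (fun k => a * x k)).
 - by rewrite rsum_scal H2 Rmult_1_r.
 - move=> k. rewrite Rabs_pos_eq //. by apply Rmult_le_pos. Qed.

Lemma D1_bound (K : finType) (f : Pt K -> R) x : D1 f -> inX x -> -1 <= f x <= 1.
Proof.
move=> [_ H] Hx. have E := l1_X Hx Rle_0_1. rewrite /l1 in E. split.
- have := H x x Hx Hx 0 1 (Rle_refl 0) Rle_0_1. rewrite /l1.
  rewrite (@rsum_ext _ _ (fun k => Rabs (1 * x k))); last by move=> k; rewrite -Rabs_Ropp; f_equal; ring.
  rewrite E. lra.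
- have := H x x Hx Hx 1 0 Rle_0_1 (Rle_refl 0). rewrite /l1.
  rewrite (@rsum_ext _ _ (fun k => Rabs (1 * x k))); last by move=> k; f_equal; ring.
  rewrite E. lra.
Qed.

Lemma marg_nonneg (K S : finType) (pi : K * S -> R) s : inDelta pi -> 0 <= marg pi s.
Proof. move=> [H _]. apply rsum_nonneg => k; apply H. Qed.

Lemma pi_le_marg (K S : finType) (pi : K * S -> R) k s : inDelta pi -> pi (k, s) <= marg pi s.
Proof. move=> [H _]. rewrite /marg. apply: (@rsum_ge_term K (fun k => pi (k, s)) k) => t; apply H. Qed.

Lemma post_inX (K S : finType) (pi : K * S -> R) s : inDelta pi -> marg pi s <> 0 -> inX (post pi s).
Proof.
move=> Hd Hm. have Hm0 := marg_nonneg s Hd. case: Hd => [H H1]. split.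
- move=> k; rewrite /post. apply Rmult_le_pos; first by apply H. apply Rlt_le, Rinv_0_lt_compat; lra.
- rewrite /post /Rdiv. rewrite (@rsum_ext _ _ (fun k => / marg pi s * pi (k, s))); last by move=> k; ring.
  rewrite rsum_scal. rewrite /marg in Hm *. field. exact Hm.
Qed.

Lemma sum_marg (K S : finType) (pi : K * S -> R) : rsum (marg pi) = rsum pi.
Proof. by rewrite rsum_pair /marg rsum_swap. Qed.

Lemma psi_nonneg (K S : finType) (pi : K * S -> R) x : inDelta pi -> 0 <= psi pi x.
Proof. move=> Hd. apply rsum_nonneg => s. destruct excluded_middle_informative; simpl; [exact: marg_nonneg|lra]. Qed.

Lemma psi_support (K S : finType) (pi : K * S -> R) x : psi pi x <> 0 ->
  exists s, post pi s = x /\ marg pi s <> 0.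
Proof.
move=> H. apply NNPP => H2. apply H. rewrite /psi.
rewrite (@rsum_ext _ _ (fun _ => 0)) ?rsum_0 //. move=> s.
destruct excluded_middle_informative as [E|E]; simpl; last reflexivity.
apply NNPP => H3. apply H2. by exists s.
Qed.

Lemma psi_ge (K S : finType) (pi : K * S -> R) s : inDelta pi -> marg pi s <= psi pi (post pi s).
Proof.
move=> Hd. rewrite /psi.
have := @rsum_ge_term S (fun s0 => if excluded_middle_informative (post pi s0 = post pi s) then marg pi s0 else 0) s.
destruct (excluded_middle_informative (post pi s = post pi s)) as [e|n]; simpl; last by case: n. apply. move=> t.
destruct excluded_middle_informative; simpl; [exact: marg_nonneg|lra].
Qed.

Lemma lsum_ext (A : Type) (F G : A -> R) l : (forall x, F x = G x) -> lsum F l = lsum G l.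
Proof. move=> H; elim: l => //= a l ->; by rewrite H. Qed.

Lemma integ_psi_l (K S : finType) (pi : K * S -> R) (f : Pt K -> R) l : inDelta pi -> NoDup l ->
  (forall x, psi pi x <> 0 -> In x l) ->
  lsum (fun x => psi pi x * f x) l = rsum (fun s => marg pi s * f (post pi s)).
Proof.
move=> Hd Nl Cl.
rewrite (@lsum_ext _ _ (fun x => rsum (fun s => if excluded_middle_informative (post pi s = x) then marg pi s * f (post pi s) else 0))); last first.
  move=> x. rewrite /psi Rmult_comm -rsum_scal. apply rsum_ext => s.
  destruct excluded_middle_informative as [e|e]; simpl; [rewrite e|]; ring.
rewrite lsum_rsum. apply rsum_ext => s. rewrite lsum_eqind //.
destruct excluded_middle_informative as [Hi|Hn]; simpl; first reflexivity.
have : psi pi (post pi s) = 0 by apply NNPP => H; apply Hn, Cl.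
have := psi_ge s Hd. have := marg_nonneg s Hd. move=> H1 H2 H3.
have -> : marg pi s = 0 by lra. ring.
Qed.

Lemma mem_In (T : eqType) (x : T) (s : seq T) : x \in s -> In x s.
Proof. elim: s => [|a s IH] //=. rewrite in_cons => /orP [/eqP ->|H]; [by left|right; auto]. Qed.

Lemma In_enum (T : finType) (t : T) : In t (enum T).
Proof. apply mem_In. by rewrite mem_enum. Qed.

Lemma psi_fsprob (K S : finType) (pi : K * S -> R) : inDelta pi -> is_fsprob (psi pi).
Proof.
move=> Hd. split; [|split].
- move=> x; exact: psi_nonneg.
- move=> x /psi_support [s [<- Hm]]. exact: post_inX.
- pose dec := fun x y : Pt K => match excluded_middle_informative (x = y) with left e => left e | right n => right n end.
  have Nl : NoDup (nodup dec (map (post pi) (enum S))) by apply NoDup_nodup.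
  have Cl : forall x, psi pi x <> 0 -> In x (nodup dec (map (post pi) (enum S))).
  { move=> x /psi_support [s [<- _]]. apply nodup_In. apply in_map, In_enum. }
  exists (nodup dec (map (post pi) (enum S))). split; [|split] => //.
  rewrite (@lsum_ext _ _ (fun x => psi pi x * (fun _ => 1) x)); last by move=> x; ring.
  rewrite (integ_psi_l (fun _ => 1) Hd Nl Cl).
  rewrite (@rsum_ext _ _ (marg pi)); last by move=> s; ring.
  rewrite sum_marg. by case: Hd.
Qed.

Lemma lsum_le (A : Type) (F G : A -> R) l : (forall x, F x <= G x) -> lsum F l <= lsum G l.
Proof. move=> H; elim: l => [|a l IH] /=; [lra|]. have := H a; lra. Qed.

Lemma lsum_opp (A : Type) (F : A -> R) l : lsum (fun x => - F x) l = - lsum F l.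
Proof. elim: l => [|a l IH] /=; [ring|]. rewrite IH; ring. Qed.

Lemma rsum_sub (T : finType) (F G : T -> R) : rsum F - rsum G = rsum (fun t => F t - G t).
Proof. rewrite /Rminus -rsum_opp -rsum_add. by []. Qed.

Lemma D1_zero (K : finType) : D1 (fun _ : Pt K => 0).
Proof. split.
- move=> x _ eps He. exists eps; split => // y _ _. rewrite Rminus_0_r Rabs_R0. lra.
- move=> x y _ _ a b _ _. rewrite /l1. have := rsum_nonneg (fun k => Rabs_pos (a * x k - b * y k)). lra.
Qed.

Lemma integ_upper (K : finType) (u f : Pt K -> R) : is_fsprob u -> D1 f ->
  integ u f <= lsum u (fsupp u).
Proof.
move=> [Hp [HX _]] Hf. rewrite /integ. apply lsum_le => x.
case: (Req_dec (u x) 0) => [->|H]; first lra.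
have := D1_bound Hf (HX x H). have := Hp x. nra.
Qed.

Lemma integ_lower (K : finType) (u f : Pt K -> R) : is_fsprob u -> D1 f ->
  - lsum u (fsupp u) <= integ u f.
Proof.
move=> [Hp [HX _]] Hf. rewrite /integ -lsum_opp. apply lsum_le => x.
case: (Req_dec (u x) 0) => [->|H]; first lra.
have := D1_bound Hf (HX x H). have := Hp x. nra.
Qed.

Lemma dstar_spec (K : finType) (u v : Pt K -> R) : is_fsprob u -> is_fsprob v ->
  is_lub (dstar_set u v) (dstar u v).
Proof.
move=> Hu Hv. rewrite /dstar. apply: (epsilon_spec (inhabits 0) (fun r => is_lub (dstar_set u v) r)).
have Hb : bound (dstar_set u v).
{ exists (lsum u (fsupp u) + lsum v (fsupp v)). move=> r [f [Hf ->]].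
  have := integ_upper Hu Hf. have := integ_lower Hv Hf. lra. }
have Hne : exists x, dstar_set u v x.
{ eexists. exists (fun _ => 0). split; [exact: D1_zero|reflexivity]. }
have [m Hm] := completeness _ Hb Hne. by exists m.
Qed.

Lemma dstar_le (K : finType) (u v : Pt K -> R) M : is_fsprob u -> is_fsprob v ->
  (forall f, D1 f -> integ u f - integ v f <= M) -> dstar u v <= M.
Proof.
move=> Hu Hv H. have [_ H2] := dstar_spec Hu Hv. apply H2. move=> r [f [Hf ->]]. by apply H.
Qed.

Lemma dstar_ge (K : finType) (u v : Pt K -> R) f : is_fsprob u -> is_fsprob v ->
  D1 f -> integ u f - integ v f <= dstar u v.
Proof.
move=> Hu Hv Hf. have [H1 _] := dstar_spec Hu Hv. apply H1. by exists f.
Qed.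

Lemma integ_psi (K S : finType) (pi : K * S -> R) (f : Pt K -> R) : inDelta pi ->
  integ (psi pi) f = rsum (fun s => marg pi s * f (post pi s)).
Proof.
move=> Hd. have [N C] := fsupp_spec (psi_fsprob Hd). rewrite /integ. exact: integ_psi_l.
Qed.

Definition z0 (K : finType) (k0 : K) : Pt K := fun k => if k == k0 then 1 else 0.

Lemma z0_inX (K : finType) (k0 : K) : inX (z0 k0).
Proof. split.
- move=> k; rewrite /z0; case: (k == k0); lra.
- rewrite /z0. have := rsum_delta k0 (fun _ => 1). by []. Qed.

Definition pt (K S : finType) (k0 : K) (pi : K * S -> R) s : Pt K :=
  if excluded_middle_informative (marg pi s = 0) then z0 k0 else post pi s.

Lemma pt_inX (K S : finType) (k0 : K) (pi : K * S -> R) s : inDelta pi -> inX (pt k0 pi s).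
Proof. move=> Hd; rewrite /pt. destruct excluded_middle_informative as [H|H]; simpl; [exact: z0_inX|exact: post_inX]. Qed.

Lemma pt_pi (K S : finType) (k0 : K) (pi : K * S -> R) s k : inDelta pi -> pi (k, s) = marg pi s * pt k0 pi s k.
Proof.
move=> Hd; rewrite /pt. destruct excluded_middle_informative as [H|H]; simpl.
- rewrite H. have := pi_le_marg k s Hd. have := (proj1 Hd) (k, s). lra.
- rewrite /post. field. exact H.
Qed.

Lemma pt_f (K S : finType) (k0 : K) (pi : K * S -> R) (f : Pt K -> R) s :
  marg pi s * f (post pi s) = marg pi s * f (pt k0 pi s).
Proof. rewrite /pt. destruct excluded_middle_informative as [H|H]; simpl; last by []. rewrite H; ring. Qed.

Lemma part1_ineq (K S : finType) (k0 : K) (pi pi' : K * S -> R) f : inDelta pi -> inDelta pi' -> D1 f ->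
  integ (psi pi) f - integ (psi pi') f <= l1 (fun t => pi t - pi' t).
Proof.
move=> Hd Hd' [_ Hf].
rewrite !integ_psi // /l1 rsum_pair rsum_swap rsum_sub.
apply rsum_le => s.
rewrite (pt_f k0 pi f s) (pt_f k0 pi' f s).
have := Hf _ _ (pt_inX k0 s Hd) (pt_inX k0 s Hd') _ _ (marg_nonneg s Hd) (marg_nonneg s Hd').
rewrite /l1 (@rsum_ext _ (fun k => Rabs (marg pi s * pt k0 pi s k - marg pi' s * pt k0 pi' s k)) (fun k => Rabs (pi (k, s) - pi' (k, s)))).
- lra.
- move=> k. by rewrite -!pt_pi.
Qed.

Lemma rsum_single (T : finType) (t0 : T) (G : T -> R) :
  (forall t, t != t0 -> G t = 0) -> rsum G = G t0.
Proof.
move=> H. rewrite -(rsum_delta t0 G). apply rsum_ext => t.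
case E: (t == t0) => //. apply H. by rewrite E.
Qed.

Lemma rsum_bool (F : bool -> R) : rsum F = F true + F false.
Proof.
rewrite /rsum (bigD1 true) //= (bigD1 false) //= big1 ?Rplus_0_r //.
by case.
Qed.

Lemma rsum_unit (F : unit -> R) : rsum F = F tt.
Proof. apply rsum_single. by case. Qed.

Lemma rsum_zero (T : finType) (F : T -> R) : (forall t, F t = 0) -> rsum F = 0.
Proof. move=> H; rewrite (@rsum_ext _ _ (fun _ => 0)) ?rsum_0 //. Qed.

Lemma nth_In' (A : Type) (x0 : A) (l : list A) i : (i < size l)%N -> In (nth x0 l i) l.
Proof. elim: l i => [|a l IH] [|i] //= H; [by left|right; by apply IH]. Qed.
Arguments rsum_single [T] t0 [G].

Definition sg (b : bool) : R := if b then 1 else -1.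

Section LP.
Variable K : finType.
Variables lu lv : list (Pt K).
Variables u v : Pt K -> R.
Variable cc : R.

Local Notation I := (ordinal (size lu)).
Local Notation J := (ordinal (size lv)).
Definition xi (i : I) : Pt K := nth (fun _ => 0) lu i.
Definition yj (j : J) : Pt K := nth (fun _ => 0) lv j.

Local Notation V := (((I * J) * bool) + ((I * J) * K))%type.
Local Notation C := ((((I * J) * K) * bool) + (((I * J) * bool) + ((I * bool) + ((J * bool) + unit))))%type.

Definition Acoef (c : C) (w : V) : R :=
 match c with
 | inl (((i, j), k), s) => match w with
     | inl (p, ab) => if p == (i, j) then (if ab then sg s * xi i k else - (sg s * yj j k)) else 0
     | inr (p, k') => if (p == (i, j)) && (k' == k) then -1 else 0 end
 | inr (inl (p, ab)) => match w with
     | inl (p', ab') => if (p' == p) && (ab' == ab) then -1 else 0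
     | inr _ => 0 end
 | inr (inr (inl (i, s))) => match w with
     | inl ((i', _), true) => if i' == i then sg s else 0
     | _ => 0 end
 | inr (inr (inr (inl (j, s)))) => match w with
     | inl ((_, j'), false) => if j' == j then sg s else 0
     | _ => 0 end
 | inr (inr (inr (inr _))) => match w with inl _ => 0 | inr _ => 1 end
 end.

Definition bcoef (c : C) : R :=
 match c with
 | inl _ => 0
 | inr (inl _) => 0
 | inr (inr (inl (i, s))) => sg s * u (xi i)
 | inr (inr (inr (inl (j, s)))) => sg s * v (yj j)
 | inr (inr (inr (inr _))) => cc
 end.

Section Dots.
Variable x : V -> R.
Definition aa (i : I) (j : J) := x (inl ((i, j), true)).
Definition bb (i : I) (j : J) := x (inl ((i, j), false)).
Definition tt_ (i : I) (j : J) (k : K) := x (inr ((i, j), k)).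

Lemma dT i j k s : dotv (Acoef (inl (((i, j), k), s))) x =
  sg s * (aa i j * xi i k - bb i j * yj j k) - tt_ i j k.
Proof.
rewrite /dotv rsum_sum (@rsum_pair (I * J)%type bool) (@rsum_pair (I * J)%type K).
rewrite (rsum_single (i, j)); last first.
{ move=> p /negbTE Hp. apply rsum_zero => ab /=. rewrite Hp /=; ring. }
rewrite (rsum_single (i, j)); last first.
{ move=> p /negbTE Hp. apply rsum_zero => k' /=. rewrite Hp /=; ring. }
rewrite rsum_bool /= eqxx.
rewrite (rsum_single k); last first.
{ move=> k' /negbTE Hk. rewrite /= ?Hk ?andbF /=; ring. }
rewrite /= !eqxx. rewrite -/(aa i j) -/(bb i j) -/(tt_ i j k). ring.
Qed.

Lemma dN p ab : dotv (Acoef (inr (inl (p, ab)))) x = - x (inl (p, ab)).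
Proof.
rewrite /dotv rsum_sum (@rsum_pair (I * J)%type bool) (@rsum_pair (I * J)%type K).
rewrite (rsum_single p); last first.
{ move=> p' /negbTE Hp. apply rsum_zero => ab' /=. rewrite Hp /=; ring. }
rewrite (rsum_single ab); last first.
{ move=> ab' /negbTE Hp. rewrite /= eqxx Hp /=; ring. }
rewrite (@rsum_zero _ (fun a => rsum _)); last first.
{ move=> q; apply rsum_zero => k /=; ring. }
rewrite /= !eqxx /=. ring.
Qed.

Lemma dMU i s : dotv (Acoef (inr (inr (inl (i, s))))) x = sg s * rsum (fun j => aa i j).
Proof.
rewrite /dotv rsum_sum (@rsum_pair (I * J)%type bool) (@rsum_pair (I * J)%type K).
rewrite [X in _ + X = _]rsum_zero; last first.
{ move=> q; apply rsum_zero => k /=; ring. }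
rewrite rsum_pair -rsum_scal.
rewrite (rsum_single i); last first.
{ move=> i' /negbTE Hi. apply rsum_zero => j. rewrite rsum_bool /= Hi /=; ring. }
rewrite Rplus_0_r. apply rsum_ext => j. rewrite rsum_bool /= eqxx /aa. ring.
Qed.

Lemma dMV j s : dotv (Acoef (inr (inr (inr (inl (j, s)))))) x = sg s * rsum (fun i => bb i j).
Proof.
rewrite /dotv rsum_sum (@rsum_pair (I * J)%type bool) (@rsum_pair (I * J)%type K).
rewrite [X in _ + X = _]rsum_zero; last first.
{ move=> q; apply rsum_zero => k /=; ring. }
rewrite rsum_pair rsum_swap -rsum_scal.
rewrite (rsum_single j); last first.
{ move=> j' /negbTE Hj. apply rsum_zero => i. rewrite rsum_bool /= Hj /=; ring. }
rewrite Rplus_0_r. apply rsum_ext => i. rewrite rsum_bool /= eqxx /bb. ring.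
Qed.

Lemma dC e : dotv (Acoef (inr (inr (inr (inr e))))) x = rsum (fun q : (I * J) * K => x (inr q)).
Proof.
rewrite /dotv rsum_sum.
rewrite (@rsum_zero _ (fun a => _)); last first.
{ move=> q /=; ring. }
rewrite Rplus_0_l. apply rsum_ext => q /=. ring.
Qed.
End Dots.
Section Coefs.
Variable y : C -> R.
Definition lam (p : I * J) (k : K) (s : bool) := y (inl ((p, k), s)).
Definition mu (p : I * J) (ab : bool) := y (inr (inl (p, ab))).
Definition yU (i : I) (s : bool) := y (inr (inr (inl (i, s)))).
Definition yV (j : J) (s : bool) := y (inr (inr (inr (inl (j, s))))).
Definition th := y (inr (inr (inr (inr tt)))).

Lemma Ca i j : rsum (fun c => y c * Acoef c (inl ((i, j), true))) =
  rsum (fun k => rsum (fun s => lam (i, j) k s * (sg s * xi i k))) - mu (i, j) true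
  + (yU i true - yU i false).
Proof.
rewrite !rsum_sum.
rewrite (@rsum_pair ((I * J) * K)%type bool) (@rsum_pair (I * J)%type K).
rewrite (rsum_single (i, j)); last first.
{ move=> [i' j'] Hp. apply rsum_zero => k. apply rsum_zero => s /=.
  rewrite eq_sym (negbTE Hp) /=; ring. }
rewrite (@rsum_pair (I * J)%type bool) (rsum_single (i, j)); last first.
{ move=> p Hp. apply rsum_zero => ab /=. rewrite eq_sym (negbTE Hp) /=; ring. }
rewrite (@rsum_pair I bool) (rsum_single i); last first.
{ move=> i' Hi. apply rsum_zero => s /=. rewrite eq_sym (negbTE Hi) /=; ring. }
rewrite [X in _ + (_ + (_ + (X + _))) = _]rsum_zero; last first.
{ move=> [j' s] /=; ring. }
rewrite rsum_unit !rsum_bool /= /lam /mu /yU /sg. rewrite !eqxx /=. match goal with |- ?A + _ = ?B - _ + _ => have E : A = B by reflexivity end. rewrite E. ring.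
Qed.
Lemma Cb i j : rsum (fun c => y c * Acoef c (inl ((i, j), false))) =
  rsum (fun k => rsum (fun s => lam (i, j) k s * - (sg s * yj j k))) - mu (i, j) false
  + (yV j true - yV j false).
Proof.
rewrite !rsum_sum.
rewrite (@rsum_pair ((I * J) * K)%type bool) (@rsum_pair (I * J)%type K).
rewrite (rsum_single (i, j)); last first.
{ move=> [i' j'] Hp. apply rsum_zero => k. apply rsum_zero => s /=.
  rewrite eq_sym (negbTE Hp) /=; ring. }
rewrite (@rsum_pair (I * J)%type bool) (rsum_single (i, j)); last first.
{ move=> p Hp. apply rsum_zero => ab /=. rewrite eq_sym (negbTE Hp) /=; ring. }
rewrite [X in _ + (_ + (X + _)) = _]rsum_zero; last first.
{ move=> [i' s] /=; ring. }
rewrite (@rsum_pair J bool) (rsum_single j); last first.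
{ move=> j' Hj. apply rsum_zero => s /=. rewrite eq_sym (negbTE Hj) /=; ring. }
rewrite rsum_unit !rsum_bool /= /lam /mu /yV /sg. rewrite !eqxx /=.
match goal with |- ?A + _ = ?B - _ + _ => have E : A = B by reflexivity end. rewrite E. ring.
Qed.

Lemma Ct i j k : rsum (fun c => y c * Acoef c (inr ((i, j), k))) =
  - (lam (i, j) k true + lam (i, j) k false) + th.
Proof.
rewrite !rsum_sum.
rewrite (@rsum_pair ((I * J) * K)%type bool) (@rsum_pair (I * J)%type K).
rewrite (rsum_single (i, j)); last first.
{ move=> [i' j'] Hp. apply rsum_zero => k'. apply rsum_zero => s /=.
  rewrite eq_sym (negbTE Hp) /=; ring. }
rewrite (rsum_single k); last first.
{ move=> k' Hk. apply rsum_zero => s /=. rewrite eqxx eq_sym (negbTE Hk) /=; ring. }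
rewrite [X in _ + (X + _) = _]rsum_zero; last first.
{ move=> [p ab] /=; ring. }
rewrite [X in _ + (_ + (X + _)) = _]rsum_zero; last first.
{ move=> [i' s] /=; ring. }
rewrite [X in _ + (_ + (_ + (X + _))) = _]rsum_zero; last first.
{ move=> [j' s] /=; ring. }
rewrite rsum_unit !rsum_bool /= /lam /th !eqxx /=. ring.
Qed.

Lemma Crhs : rsum (fun c => y c * bcoef c) =
  rsum (fun i => (yU i true - yU i false) * u (xi i)) +
  rsum (fun j => (yV j true - yV j false) * v (yj j)) + th * cc.
Proof.
rewrite !rsum_sum.
rewrite [X in X + _ = _]rsum_zero; last first.
{ move=> [[p k] s] /=; ring. }
rewrite [X in _ + (X + _) = _]rsum_zero; last first.
{ move=> [p ab] /=; ring. }
rewrite (@rsum_pair I bool) (@rsum_pair J bool) rsum_unit /th.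
rewrite (@rsum_ext _ (fun a => rsum (fun b => y (inr (inr (inl (a, b)))) * bcoef (inr (inr (inl (a, b))))))
  (fun i => (yU i true - yU i false) * u (xi i))); last first.
{ move=> i. rewrite rsum_bool /= /yU /sg. ring. }
rewrite (@rsum_ext _ (fun a => rsum (fun b => y (inr (inr (inr (inl (a, b))))) * bcoef (inr (inr (inr (inl (a, b)))))))
  (fun j => (yV j true - yV j false) * v (yj j))); last first.
{ move=> j. rewrite rsum_bool /= /yV /sg. ring. }
simpl. ring.
Qed.
End Coefs.
End LP.

Definition D1i (K : finType) (g : Pt K -> R) := forall x y, inX x -> inX y -> forall a b, 0 <= a -> 0 <= b ->
  a * g x - b * g y <= l1 (fun k => a * x k - b * y k).

Lemma sum_diff (K : finType) (x y : Pt K) a b : inX x -> inX y ->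
  rsum (fun k => a * x k - b * y k) = a - b.
Proof. move=> [_ Hx] [_ Hy]. rewrite -rsum_sub !rsum_scal Hx Hy. ring. Qed.

Lemma D1i_lin (K : finType) (c : K -> R) : (forall k, Rabs (c k) <= 1) -> D1i (fun z => rsum (fun k => c k * z k)).
Proof.
move=> Hc x y Hx Hy a b Ha Hb. rewrite -!rsum_scal rsum_sub /l1.
apply rsum_le => k.
have -> : a * (c k * x k) - b * (c k * y k) = c k * (a * x k - b * y k) by ring.
apply: Rle_trans; first by apply Rle_abs.
rewrite Rabs_mult. have := Hc k. have := Rabs_pos (a * x k - b * y k). have := Rabs_pos (c k). nra.
Qed.

Lemma D1i_const (K : finType) (r : R) : -1 <= r <= 1 -> D1i (fun _ : Pt K => r).
Proof.
move=> Hr x y Hx Hy a b Ha Hb. rewrite /l1.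
apply: Rle_trans; last by apply rsum_abs.
rewrite sum_diff //. have -> : a * r - b * r = r * (a - b) by ring.
apply: Rle_trans; first by apply Rle_abs.
rewrite Rabs_mult. have := Rabs_pos (a - b). have : Rabs r <= 1 by apply Rabs_le; lra. nra.
Qed.

Lemma D1i_max (K : finType) (g h : Pt K -> R) : D1i g -> D1i h -> D1i (fun z => Rmax (g z) (h z)).
Proof.
move=> Hg Hh x y Hx Hy a b Ha Hb.
have := Hg x y Hx Hy a b Ha Hb. have := Hh x y Hx Hy a b Ha Hb.
have := Rmax_l (g y) (h y). have := Rmax_r (g y) (h y).
set M := Rmax (g y) (h y). move=> H1 H2 H3 H4.
have HM1 : b * g y <= b * M by apply Rmult_le_compat_l.
have HM2 : b * h y <= b * M by apply Rmult_le_compat_l.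
case: (Rle_dec (h x) (g x)) => Hxx.
- rewrite Rmax_left //. lra.
- rewrite Rmax_right; lra.
Qed.

Lemma D1i_min (K : finType) (g h : Pt K -> R) : D1i g -> D1i h -> D1i (fun z => Rmin (g z) (h z)).
Proof.
move=> Hg Hh x y Hx Hy a b Ha Hb.
have := Hg x y Hx Hy a b Ha Hb. have := Hh x y Hx Hy a b Ha Hb.
have := Rmin_l (g x) (h x). have := Rmin_r (g x) (h x).
set M := Rmin (g x) (h x). move=> H1 H2 H3 H4.
have HM1 : a * M <= a * g x by apply Rmult_le_compat_l.
have HM2 : a * M <= a * h x by apply Rmult_le_compat_l.
case: (Rle_dec (g y) (h y)) => Hyy.
- rewrite Rmin_left //. lra.
- rewrite Rmin_right; lra.
Qed.

Lemma D1i_D1 (K : finType) (g : Pt K -> R) : D1i g -> D1 g.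
Proof.
move=> H. split => //.
move=> x Hx eps He. exists eps. split => // y Hy Hd.
have E : l1 (fun k => 1 * x k - 1 * y k) = l1 (fun k => x k - y k) by apply rsum_ext => k; f_equal; ring.
have E' : l1 (fun k => 1 * y k - 1 * x k) = l1 (fun k => x k - y k).
{ apply rsum_ext => k. rewrite -Rabs_Ropp. f_equal; ring. }
have := H x y Hx Hy 1 1 Rle_0_1 Rle_0_1. have := H y x Hy Hx 1 1 Rle_0_1 Rle_0_1.
rewrite E E' => H1 H2. apply Rabs_def1; lra.
Qed.

Definition fmax (K : finType) (g h : Pt K -> R) : Pt K -> R := fun z => Rmax (g z) (h z).
Definition fmin (K : finType) (g h : Pt K -> R) : Pt K -> R := fun z => Rmin (g z) (h z).

Section Build.
Variables (K I J : finType) (c : I -> J -> K -> R).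
Hypothesis Hc : forall i j k, Rabs (c i j k) <= 1.
Definition linf i j : Pt K -> R := fun z => rsum (fun k => c i j k * z k).
Definition Gi i : Pt K -> R := \big[@fmin K/(fun _ => 1)]_j linf i j.
Definition Ff : Pt K -> R := \big[@fmax K/(fun _ => -1)]_i Gi i.

Lemma Ff_D1 : D1 Ff.
Proof.
apply D1i_D1. rewrite /Ff. apply: (big_ind (@D1i K)).
- apply D1i_const; lra.
- move=> g h; exact: D1i_max.
- move=> i _. rewrite /Gi. apply: (big_ind (@D1i K)).
  + apply D1i_const; lra.
  + move=> g h; exact: D1i_min.
  + move=> j _. exact: D1i_lin.
Qed.

Lemma Gi_eval i z : Gi i z = \big[Rmin/1]_j linf i j z.
Proof. rewrite /Gi. by apply: (big_morph (fun g : Pt K -> R => g z)). Qed.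

Lemma Ff_eval z : Ff z = \big[Rmax/-1]_i Gi i z.
Proof. rewrite /Ff. by apply: (big_morph (fun g : Pt K -> R => g z)). Qed.

Lemma linf_bound i j z : inX z -> -1 <= linf i j z <= 1.
Proof.
move=> [Hp Hs]. rewrite /linf.
have H := rsum_abs (fun k => c i j k * z k).
have : rsum (fun k => Rabs (c i j k * z k)) <= 1.
{ rewrite -Hs. apply rsum_le => k. rewrite Rabs_mult (Rabs_pos_eq (z k)) //.
  have := Hc i j k. have := Hp k. nra. }
move=> H2. have := Rle_abs (rsum (fun k => c i j k * z k)).
have := Rle_abs (- rsum (fun k => c i j k * z k)). rewrite Rabs_Ropp. lra.
Qed.

Lemma Ff_lower z i m : m <= 1 -> (forall j, m <= linf i j z) -> m <= Ff z.
Proof.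
move=> H1 H2. rewrite Ff_eval. apply: Rle_trans; last first.
- apply: (@bigmax_ge_seq _ (index_enum I) (fun _ => true) (fun i => Gi i z) (-1) i) => //.
- rewrite Gi_eval. apply: (big_ind (fun r => m <= r)) => //.
  move=> a b Ha Hb. by apply Rmin_glb.
Qed.

Lemma Ff_upper z j M : -1 <= M -> (forall i, linf i j z <= M) -> Ff z <= M.
Proof.
move=> H1 H2. rewrite Ff_eval. apply: (big_ind (fun r => r <= M)) => //.
- move=> a b Ha Hb. by apply Rmax_lub.
- move=> i _. rewrite Gi_eval. apply: Rle_trans; last by apply (H2 i).
  apply: (@bigmin_le_seq _ (index_enum J) (fun _ => true) (fun j => linf i j z) 1 j) => //.
Qed.
End Build.

Lemma In_nth_ex (A : Type) (x0 x : A) (l : list A) : In x l -> exists n, (n < size l)%N /\ nth x0 l n = x.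
Proof.
elim: l => [|a l IH] //= [->|H]; first by exists 0%N.
have [n [H1 H2]] := IH H. by exists n.+1.
Qed.

Lemma NoDup_nth_inj (A : Type) (x0 : A) (l : list A) n1 n2 : NoDup l ->
  (n1 < size l)%N -> (n2 < size l)%N -> nth x0 l n1 = nth x0 l n2 -> n1 = n2.
Proof.
elim: l n1 n2 => [|a l IH] [|n1] [|n2] N H1 H2 E //=; inversion N as [|a0 l0 Ha Hl]; subst.
- exfalso; apply Ha. rewrite /= in E. rewrite E. exact: nth_In'.
- exfalso; apply Ha. rewrite /= in E. rewrite -E. exact: nth_In'.
- f_equal. exact: IH.
Qed.

Lemma psi_build (K : finType) (l : list (Pt K)) (w : Pt K -> R) (S : finType)
  (idx : S -> 'I_(size l)) (a : S -> R) :
  NoDup l -> (forall x, w x <> 0 <-> In x l) -> (forall i : 'I_(size l), inX (nth (fun _ => 0) l i)) ->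
  (forall s, 0 <= a s) ->
  (forall i, rsum (fun s => if idx s == i then a s else 0) = w (nth (fun _ => 0) l i)) ->
  psi (fun q : K * S => a q.2 * nth (fun _ => 0) l (idx q.2) q.1) = w.
Proof.
move=> Nl Cl HX Ha Hsum. apply functional_extensionality => x.
set nt := fun i : 'I_(size l) => nth (fun _ => 0) l i.
rewrite /psi.
have Hm : forall s, marg (fun q : K * S => a q.2 * nth (fun _ => 0) l (idx q.2) q.1) s = a s.
{ move=> s. rewrite /marg /= rsum_scal. case: (HX (idx s)) => _ ->. ring. }
rewrite (@rsum_ext _ _ (fun s => if excluded_middle_informative (nt (idx s) = x) then a s else 0)); last first.
{ move=> s. rewrite Hm. case: (Req_dec (a s) 0) => Ha0.
  - rewrite Ha0. by destruct excluded_middle_informative; destruct excluded_middle_informative.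
  - have -> : post (fun q : K * S => a q.2 * nth (fun _ => 0) l (idx q.2) q.1) s = nt (idx s).
    { apply functional_extensionality => k. rewrite /post Hm /=. rewrite /nt. field. exact Ha0. }
    by []. }
rewrite (@rsum_ext _ _ (fun s => rsum (fun i => if idx s == i then (if excluded_middle_informative (nt i = x) then a s else 0) else 0))); last first.
{ move=> s. rewrite (rsum_single (idx s)); first by rewrite eqxx.
  move=> i /negbTE Hi. by rewrite eq_sym Hi. }
rewrite rsum_swap.
rewrite (@rsum_ext _ _ (fun i => if excluded_middle_informative (nt i = x) then w (nt i) else 0)); last first.
{ move=> i. rewrite -Hsum. destruct excluded_middle_informative; simpl; first by [].
  apply rsum_zero => s. by case: (idx s == i). }
case: (classic (In x l)) => Hin.
- have [n [Hn Hnx]] := In_nth_ex (fun _ => 0) Hin.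
  rewrite (rsum_single (Ordinal Hn)).
  + rewrite /nt /=. destruct excluded_middle_informative as [e|e]; simpl; first by rewrite Hnx.
    by case: e.
  + move=> i Hi. destruct excluded_middle_informative as [e|e]; simpl; last by [].
    exfalso. move/negP: Hi; apply. apply/eqP. apply: val_inj => /=.
    apply: (@NoDup_nth_inj _ (fun _ => 0) l) => //. rewrite /nt in e. by rewrite e Hnx.
- have -> : w x = 0 by apply NNPP => H; apply Hin, Cl.
  apply rsum_zero => i. destruct excluded_middle_informative as [e|e]; simpl; last by [].
  exfalso; apply Hin. rewrite -e. exact: nth_In'.
Qed.

Lemma inDelta_build (K : finType) (l : list (Pt K)) (w : Pt K -> R) (S : finType)
  (idx : S -> 'I_(size l)) (a : S -> R) :
  (forall i : 'I_(size l), inX (nth (fun _ => 0) l i)) -> lsum w l = 1 ->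
  (forall s, 0 <= a s) ->
  (forall i, rsum (fun s => if idx s == i then a s else 0) = w (nth (fun _ => 0) l i)) ->
  inDelta (fun q : K * S => a q.2 * nth (fun _ => 0) l (idx q.2) q.1).
Proof.
move=> HX Sl Ha Hsum. split.
- move=> [k s] /=. apply Rmult_le_pos => //. by case: (HX (idx s)) => H _.
- rewrite rsum_pair rsum_swap /=.
  rewrite (@rsum_ext _ _ a); last first.
  { move=> s. rewrite rsum_scal. case: (HX (idx s)) => _ ->. ring. }
  rewrite (@rsum_ext _ _ (fun s => rsum (fun i => if idx s == i then a s else 0))); last first.
  { move=> s. rewrite (rsum_single (idx s)); first by rewrite eqxx.
    move=> i /negbTE Hi. by rewrite eq_sym Hi. }
  rewrite rsum_swap (rsum_ext Hsum) -Sl (lsum_ord (fun _ => 0)). by [].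
Qed.

Section Key.
Variable K : finType.
Variables u v : Pt K -> R.
Variables lu lv : list (Pt K).
Hypothesis Nu : NoDup lu.
Hypothesis Cu : forall x, u x <> 0 <-> In x lu.
Hypothesis Su : lsum u lu = 1.
Hypothesis Nv : NoDup lv.
Hypothesis Cv : forall x, v x <> 0 <-> In x lv.
Hypothesis Sv : lsum v lv = 1.
Hypothesis Hu : is_fsprob u.
Hypothesis Hv : is_fsprob v.

Local Notation I := (ordinal (size lu)).
Local Notation J := (ordinal (size lv)).

Lemma xi_In (i : I) : In (@xi K lu i) lu.
Proof. exact: nth_In'. Qed.
Lemma yj_In (j : J) : In (@yj K lv j) lv.
Proof. exact: nth_In'. Qed.

Lemma xi_X (i : I) : inX (@xi K lu i).
Proof. case: Hu => _ [HX _]. apply HX. apply Cu. exact: xi_In. Qed.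
Lemma yj_X (j : J) : inX (@yj K lv j).
Proof. case: Hv => _ [HX _]. apply HX. apply Cv. exact: yj_In. Qed.

Lemma sumU : rsum (fun i : I => u (@xi K lu i)) = 1.
Proof. rewrite -Su (lsum_ord (fun _ => 0)). by []. Qed.
Lemma sumV : rsum (fun j : J => v (@yj K lv j)) = 1.
Proof. rewrite -Sv (lsum_ord (fun _ => 0)). by []. Qed.

Lemma integ_I (f : Pt K -> R) : integ u f = rsum (fun i : I => u (@xi K lu i) * f (@xi K lu i)).
Proof.
rewrite /integ. have [N C] := fsupp_spec Hu.
rewrite (@lsum_indep _ (fun x => u x * f x) (fsupp u) lu) //.
- rewrite (lsum_ord (fun _ => 0)). by [].
- move=> x H. apply C => E; apply H; rewrite E; ring.
- move=> x H. apply Cu => E; apply H; rewrite E; ring.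
Qed.
Lemma integ_J (f : Pt K -> R) : integ v f = rsum (fun j : J => v (@yj K lv j) * f (@yj K lv j)).
Proof.
rewrite /integ. have [N C] := fsupp_spec Hv.
rewrite (@lsum_indep _ (fun x => v x * f x) (fsupp v) lv) //.
- rewrite (lsum_ord (fun _ => 0)). by [].
- move=> x H. apply C => E; apply H; rewrite E; ring.
- move=> x H. apply Cv => E; apply H; rewrite E; ring.
Qed.

Lemma I_ne : exists i : I, True.
Proof.
have H : (0 < size lu)%N.
{ move: Su. case: lu => [|a l] //= ?. lra. }
by exists (Ordinal H).
Qed.
Lemma J_ne : exists j : J, True.
Proof.
have H : (0 < size lv)%N.
{ move: Sv. case: lv => [|a l] //= ?. lra. }
by exists (Ordinal H).
Qed.

Variable cc : R.

Lemma feas_case (x : (((I * J) * bool) + ((I * J) * K))%type -> R) :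
  (forall c, dotv (@Acoef K lu lv c) x <= @bcoef K lu lv u v cc c) ->
  exists (S : finType) (pi pi' : K * S -> R),
    inDelta pi /\ inDelta pi' /\ psi pi = u /\ psi pi' = v /\ l1 (fun t => pi t - pi' t) <= cc.
Proof.
move=> H.
pose a := @aa K lu lv x. pose b := @bb K lu lv x. pose t := @tt_ K lu lv x.
have Ha : forall i j, 0 <= a i j.
{ move=> i j. have := H (inr (inl ((i, j), true))). rewrite dN /=. rewrite /a /aa. lra. }
have Hb : forall i j, 0 <= b i j.
{ move=> i j. have := H (inr (inl ((i, j), false))). rewrite dN /=. rewrite /b /bb. lra. }
have Hma : forall i, rsum (fun j => a i j) = u (@xi K lu i).
{ move=> i. have := H (inr (inr (inl (i, true)))). have := H (inr (inr (inl (i, false)))).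
  rewrite !dMU /= /a. lra. }
have Hmb : forall j, rsum (fun i => b i j) = v (@yj K lv j).
{ move=> j. have := H (inr (inr (inr (inl (j, true))))). have := H (inr (inr (inr (inl (j, false))))).
  rewrite !dMV /= /b. lra. }
have Ht : forall i j k, Rabs (a i j * @xi K lu i k - b i j * @yj K lv j k) <= t i j k.
{ move=> i j k. have := H (inl (((i, j), k), true)). have := H (inl (((i, j), k), false)).
  rewrite !dT /= /a /b /t. move=> H1 H2. apply Rabs_le. lra. }
have Hc : rsum (fun q : (I * J) * K => t q.1.1 q.1.2 q.2) <= cc.
{ have := H (inr (inr (inr (inr tt)))). rewrite dC /=. move=> H1.
  apply: Rle_trans; last exact H1. apply Req_le. apply rsum_ext => [[[i j] k]]. by []. }
exists (I * J)%type.
exists (fun q : K * (I * J) => a q.2.1 q.2.2 * nth (fun _ => 0) lu q.2.1 q.1).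
exists (fun q : K * (I * J) => b q.2.1 q.2.2 * nth (fun _ => 0) lv q.2.2 q.1).
have Sa : forall i, rsum (fun s : I * J => if s.1 == i then a s.1 s.2 else 0) = u (nth (fun _ => 0) lu i).
{ move=> i. rewrite rsum_pair (rsum_single i) /=.
  - rewrite eqxx. exact: Hma.
  - move=> i' /negbTE Hi. apply rsum_zero => j /=. by rewrite Hi. }
have Sb : forall j, rsum (fun s : I * J => if s.2 == j then b s.1 s.2 else 0) = v (nth (fun _ => 0) lv j).
{ move=> j. rewrite rsum_pair rsum_swap (rsum_single j) /=.
  - rewrite eqxx. exact: Hmb.
  - move=> j' /negbTE Hj. apply rsum_zero => i /=. by rewrite Hj. }
split; [|split; [|split; [|split]]].
- exact (@inDelta_build K lu u _ (fun s => s.1) (fun s => a s.1 s.2) xi_X Su (fun s => Ha s.1 s.2) Sa).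
- exact (@inDelta_build K lv v _ (fun s => s.2) (fun s => b s.1 s.2) yj_X Sv (fun s => Hb s.1 s.2) Sb).
- exact (@psi_build K lu u _ (fun s => s.1) (fun s => a s.1 s.2) Nu Cu xi_X (fun s => Ha s.1 s.2) Sa).
- exact (@psi_build K lv v _ (fun s => s.2) (fun s => b s.1 s.2) Nv Cv yj_X (fun s => Hb s.1 s.2) Sb).
- apply: Rle_trans; last exact Hc.
  rewrite /l1 rsum_pair rsum_swap [X in _ <= X]rsum_pair.
  apply rsum_le => p. rewrite [X in _ <= X](@rsum_ext _ _ (fun k => t p.1 p.2 k)) //.
  apply rsum_le => k. case: p => i j /=. exact: Ht.
Qed.

Lemma cert_case (y : ((((I * J) * K) * bool) + (((I * J) * bool) + ((I * bool) + ((J * bool) + unit))))%type -> R) :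
  (forall c, 0 <= y c) ->
  (forall w, rsum (fun c => y c * @Acoef K lu lv c w) = 0) ->
  rsum (fun c => y c * @bcoef K lu lv u v cc c) < 0 ->
  exists f, D1 f /\ cc < integ u f - integ v f.
Proof.
move=> Hy H0 Hr.
pose L := @lam K lu lv y. pose M := @mu K lu lv y. pose A := @yU K lu lv y. pose B := @yV K lu lv y.
pose T := @th K lu lv y.
pose D := fun i j k => L (i, j) k true - L (i, j) k false.
pose al := fun i => A i true - A i false.
pose be := fun j => B j true - B j false.
have Ra : forall i j, rsum (fun k => D i j k * @xi K lu i k) = M (i, j) true - al i.
{ move=> i j. have := @Ca K lu lv y i j. rewrite H0 => E.
  have E2 : rsum (fun k => rsum (fun s => L (i, j) k s * (sg s * @xi K lu i k))) = rsum (fun k => D i j k * @xi K lu i k).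
  { apply rsum_ext => k. rewrite rsum_bool /D /sg. ring. }
  rewrite /L in E2. rewrite /al /A /M. lra. }
have Rb : forall i j, rsum (fun k => D i j k * @yj K lv j k) = be j - M (i, j) false.
{ move=> i j. have := @Cb K lu lv y i j. rewrite H0 => E.
  have E2 : rsum (fun k => rsum (fun s => L (i, j) k s * - (sg s * @yj K lv j k))) = - rsum (fun k => D i j k * @yj K lv j k).
  { rewrite -rsum_opp. apply rsum_ext => k. rewrite rsum_bool /D /sg. ring. }
  rewrite /L in E2. rewrite /be /B /M. lra. }
have Rt : forall i j k, L (i, j) k true + L (i, j) k false = T.
{ move=> i j k. have := @Ct K lu lv y i j k. rewrite H0 /L /T. lra. }
have Rr := @Crhs K lu lv u v cc y. rewrite -/A -/B -/T in Rr.
have HT : 0 <= T by apply Hy.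
have HL : forall p k s, 0 <= L p k s by move=> *; apply Hy.
have HM : forall p ab, 0 <= M p ab by move=> *; apply Hy.
have Hu0 : forall i, 0 <= u (@xi K lu i) by move=> i; case: Hu => H _; apply H.
have Hv0 : forall j, 0 <= v (@yj K lv j) by move=> j; case: Hv => H _; apply H.
have [i0 _] := I_ne. have [j0 _] := J_ne.
case: (Req_dec T 0) => HT0.
- exfalso.
  have HD : forall i j k, D i j k = 0.
  { move=> i j k. have := Rt i j k. have := HL (i, j) k true. have := HL (i, j) k false. rewrite /D. lra. }
  have Hal : forall i, 0 <= al i.
  { move=> i. have := Ra i j0. rewrite rsum_zero; last by move=> k; rewrite HD; ring.
    have := HM (i, j0) true. lra. }
  have Hbe : forall j, 0 <= be j.
  { move=> j. have := Rb i0 j. rewrite rsum_zero; last by move=> k; rewrite HD; ring.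
    have := HM (i0, j) false. lra. }
  have S1 : 0 <= rsum (fun i => (A i true - A i false) * u (@xi K lu i)).
  { apply rsum_nonneg => i. apply Rmult_le_pos => //. exact: Hal. }
  have S2 : 0 <= rsum (fun j => (B j true - B j false) * v (@yj K lv j)).
  { apply rsum_nonneg => j. apply Rmult_le_pos => //. exact: Hbe. }
  rewrite HT0 in Rr. lra.
- have HTp : 0 < T by lra.
  pose c := fun (i : I) (j : J) (k : K) => D i j k / T.
  have Hc : forall i j k, Rabs (c i j k) <= 1.
  { move=> i j k. rewrite /c /Rdiv Rabs_mult (Rabs_pos_eq (/ T)); last by apply Rlt_le, Rinv_0_lt_compat.
    have := Rt i j k. have := HL (i, j) k true. have := HL (i, j) k false. move=> H1 H2 H3.
    have : Rabs (D i j k) <= T by rewrite /D; apply Rabs_le; lra.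
    move=> H4. apply (Rmult_le_reg_r T) => //. rewrite Rmult_assoc Rinv_l; lra. }
  have Hlin : forall i j z, linf c i j z = rsum (fun k => D i j k * z k) / T.
  { move=> i j z. rewrite /linf /c /Rdiv [RHS]Rmult_comm -rsum_scal. apply rsum_ext => k. ring. }
  pose fi := fun i => - al i / T.
  pose gj := fun j => be j / T.
  have Hlow : forall i j, fi i <= linf c i j (@xi K lu i).
  { move=> i j. rewrite Hlin Ra /fi /Rdiv. apply Rmult_le_compat_r; first by apply Rlt_le, Rinv_0_lt_compat.
    have HH : forall r, 0 <= r -> - al i <= r - al i by move=> r; lra. apply HH, Hy. }
  have Hup : forall i j, linf c i j (@yj K lv j) <= gj j.
  { move=> i j. rewrite Hlin Rb /gj /Rdiv. apply Rmult_le_compat_r; first by apply Rlt_le, Rinv_0_lt_compat.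
    have HH : forall r, 0 <= r -> be j - r <= be j by move=> r; lra. apply HH, Hy. }
  exists (Ff c). split; first exact: Ff_D1.
  have F1 : forall i, fi i <= Ff c (@xi K lu i).
  { move=> i. apply: Ff_lower; last exact: (Hlow i).
    apply: Rle_trans; first exact: (Hlow i j0). by case: (linf_bound Hc i j0 (xi_X i)). }
  have F2 : forall j, Ff c (@yj K lv j) <= gj j.
  { move=> j. apply: Ff_upper; last exact: (Hup^~ j).
    apply: Rle_trans; last exact: (Hup i0 j). by case: (linf_bound Hc i0 j (yj_X j)). }
  rewrite integ_I integ_J.
  have G1 : rsum (fun i => u (@xi K lu i) * fi i) <= rsum (fun i => u (@xi K lu i) * Ff c (@xi K lu i)).
  { apply rsum_le => i. apply Rmult_le_compat_l => //. }
  have G2 : rsum (fun j => v (@yj K lv j) * Ff c (@yj K lv j)) <= rsum (fun j => v (@yj K lv j) * gj j).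
  { apply rsum_le => j. apply Rmult_le_compat_l => //. }
  have E1 : rsum (fun i => u (@xi K lu i) * fi i) = - / T * rsum (fun i => (A i true - A i false) * u (@xi K lu i)).
  { rewrite -rsum_scal. apply rsum_ext => i. rewrite /fi /al /Rdiv. ring. }
  have E2 : rsum (fun j => v (@yj K lv j) * gj j) = / T * rsum (fun j => (B j true - B j false) * v (@yj K lv j)).
  { rewrite -rsum_scal. apply rsum_ext => j. rewrite /gj /be /Rdiv. ring. }
  rewrite E1 in G1. rewrite E2 in G2.
  set SA := rsum (fun i => (A i true - A i false) * u (@xi K lu i)) in Rr G1.
  set SB := rsum (fun j => (B j true - B j false) * v (@yj K lv j)) in Rr G2.
  have : cc < - / T * SA - / T * SB.
  { have HiT : 0 < / T by apply Rinv_0_lt_compat.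
    have : T * cc < - SA - SB by lra.
    move=> H1. have : / T * (T * cc) < / T * (- SA - SB) by apply Rmult_lt_compat_l.
    rewrite -Rmult_assoc Rinv_l; lra. }
  move=> Hcc. apply: (Rlt_le_trans _ _ _ Hcc). rewrite /Rminus. apply Rplus_le_compat; [exact G1|apply Ropp_le_contravar; exact G2].
Qed.

End Key.

Lemma key (K : finType) (u v : Pt K -> R) (cc : R) : is_fsprob u -> is_fsprob v -> dstar u v < cc ->
  exists (S : finType) (pi pi' : K * S -> R),
    inDelta pi /\ inDelta pi' /\ psi pi = u /\ psi pi' = v /\ l1 (fun t => pi t - pi' t) <= cc.
Proof.
move=> Hu Hv Hlt.
have [lu [Nu [Cu Su]]] := good_list Hu.
have [lv [Nv [Cv Sv]]] := good_list Hv.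
have := @farkas _ (index_enum _) _ (@Acoef K lu lv) (@bcoef K lu lv u v cc).
case.
- move=> c w H. exfalso. apply H. apply mem_In. by rewrite mem_index_enum.
- move=> [x Hx]. exact: (feas_case Nu Cu Su Nv Cv Sv Hu Hv Hx).
- move=> [y [Hy1 [Hy2 Hy3]]]. exfalso.
  have [f [Hf Hcc]] := cert_case Nu Cu Su Nv Cv Sv Hu Hv Hy1 Hy2 Hy3.
  have := dstar_ge Hu Hv Hf. lra.
Qed.

Unset Implicit Arguments.

Theorem proposition3 (K : finType) (hK : (0 < #|K|)%N) :
  (forall (S : finType) (pi pi' : K * S -> R),
     inDelta pi -> inDelta pi' ->
     is_fsprob (psi pi) /\ is_fsprob (psi pi') /\
     dstar (psi pi) (psi pi') <= l1 (fun t => pi t - pi' t))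
  /\
  (forall u v : Pt K -> R, is_fsprob u -> is_fsprob v ->
     is_glb (fun r => exists (S : finType) (pi pi' : K * S -> R),
                inDelta pi /\ inDelta pi' /\ psi pi = u /\ psi pi' = v /\
                r = l1 (fun t => pi t - pi' t))
            (dstar u v)).
Proof.
have [k0 _] : exists k0 : K, True.
{ move/card_gt0P: hK => [k0 _]. by exists k0. }
have P1 : forall (S : finType) (pi pi' : K * S -> R), inDelta pi -> inDelta pi' ->
     dstar (psi pi) (psi pi') <= l1 (fun t => pi t - pi' t).
{ move=> S pi pi' Hd Hd'. apply dstar_le; try exact: psi_fsprob.
  move=> f Hf. exact: part1_ineq. }
split.
- move=> S pi pi' Hd Hd'. split; [exact: psi_fsprob|split; [exact: psi_fsprob|exact: P1]].
- move=> u v Hu Hv. split.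
  + move=> r [S [pi [pi' [Hd [Hd' [<- [<- ->]]]]]]]. exact: P1.
  + move=> m' Hm'. apply Rnot_lt_le => Hlt.
    have [S [pi [pi' [Hd [Hd' [E1 [E2 Hl]]]]]]] := key (cc := (dstar u v + m') / 2) Hu Hv ltac:(lra).
    have := Hm' (l1 (fun t => pi t - pi' t)) (ex_intro _ S (ex_intro _ pi (ex_intro _ pi' (conj Hd (conj Hd' (conj E1 (conj E2 erefl))))))).
    lra.
Qed.
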